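(* For every integer $k\geq 2$, let $G_k$ be the graph obtained as follows: take two vertices $u_1,u_2$ joined by $2k$ parallel edges $e_1,\dots,e_{2k}$; subdivide each $e_i$ once by a new vertex $v_i$; and for every odd $i\in\{1,3,\dots,2k-1\}$ add $2k-2$ parallel edges between $v_i$ and $v_{i+1}$. Let $\mathcal O$ be the set of $k$ pairwise edge-disjoint $4$-cycles $u_1v_iu_2v_{i+1}u_1$ (using the subdivided edges), $i\in\{1,3,\dots,2k-1\}$. Then $G_k$ is a $2$-connected $2k$-regular graph, and if $t$ is a positive integer such that some $t$-factor of $G_k$ intersects every cycle of $\mathcal O$ in at least one edge, then $t \geq k$.
   Context: Graphs are finite and loopless but may have parallel edges. A cycle is a connected $2$-regular subgraph. A $t$-factor is a spanning $t$-regular subgraph. $2$-connected means connected with no cut-vertex. *)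

(* Defs.v *)
From mathcomp Require Import all_boot.
Set Implicit Arguments. Unset Strict Implicit. Unset Printing Implicit Defensive.

Section MultiGraph.
Variables (V E : finType) (ends : E -> V * V).

Definition loopless : Prop := forall e, (ends e).1 != (ends e).2.

Definition incident (v : V) (e : E) : bool :=
  (v == (ends e).1) || (v == (ends e).2).

(* degree of v in the spanning subgraph with edge set F (loopless graphs) *)
Definition deg_in (F : {set E}) (v : V) : nat := #|[set e in F | incident v e]|.

Definition regular (d : nat) : Prop := forall v, deg_in [set: E] v = d.

Definition factor (t : nat) (F : {set E}) : Prop := forall v, deg_in F v = t.

(* adjacency in the graph with the vertex w deleted (w = None: delete nothing) *)
Definition adj_avoid (w : option V) : rel V :=
  fun x y => [exists e, ((ends e == (x, y)) || (ends e == (y, x)))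
                        && (Some x != w) && (Some y != w)].

Definition connected : Prop := forall x y, connect (adj_avoid None) x y.

Definition cut_vertex (v : V) : Prop :=
  exists x y, x != v /\ y != v /\ ~~ connect (adj_avoid (Some v)) x y.

Definition two_connected : Prop := connected /\ forall v, ~ cut_vertex v.
End MultiGraph.

(* The graph G_k.  Vertices: inl false = u1, inl true = u2,
   inr (j, false) = v_{2j+1}, inr (j, true) = v_{2j+2}  (j < k). *)
Definition Gk_V (k : nat) : finType := (bool + ('I_k * bool))%type.

(* Edges: inl ((j,b), c) = the half of the subdivided edge joining u_c to v_(j,b);
          inr (j, m)     = the m-th of the 2k-2 parallel edges joining
                           v_{2j+1} and v_{2j+2}. *)
Definition Gk_E (k : nat) : finType :=
  ((('I_k * bool) * bool) + ('I_k * 'I_(2 * k - 2)))%type.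

Definition Gk_ends (k : nat) (e : Gk_E k) : Gk_V k * Gk_V k :=
  match e with
  | inl (jb, c) => (inl c, inr jb)
  | inr (j, _) => (inr (j, false), inr (j, true))
  end.

(* edge set of the 4-cycle u1 v_{2j+1} u2 v_{2j+2} u1 of the family O *)
Definition Gk_cycle (k : nat) (j : 'I_k) : {set Gk_E k} :=
  [set e : Gk_E k | if e is inl (jb, _) then jb.1 == j else false].

(* Main.v *)
Require Import Defs.
From mathcomp Require Import all_boot zify.
Set Implicit Arguments. Unset Strict Implicit.

Section S.
Variables (V E : finType) (ends : E -> V * V).

Lemma adj_sym w : symmetric (adj_avoid ends w).
Proof.
move=> x y; apply/existsP/existsP => -[e He]; exists e; move: He;
by rewrite orbC -!andbA [(Some y != w) && _]andbC.
Qed.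

Lemma adj_edge w x y e : ends e = (x, y) -> Some x != w -> Some y != w ->
  connect (adj_avoid ends w) x y /\ connect (adj_avoid ends w) y x.
Proof.
move=> He hx hy.
have h : adj_avoid ends w x y by apply/existsP; exists e; rewrite He eqxx hx hy.
split; apply: connect1 => //; by rewrite adj_sym.
Qed.

Lemma hub w h : (forall x, Some x != w -> connect (adj_avoid ends w) x h) ->
  forall x y, Some x != w -> Some y != w -> connect (adj_avoid ends w) x y.
Proof.
move=> H x y hx hy; apply: connect_trans (H x hx) _.
by rewrite (sym_connect_sym (@adj_sym w)); apply: H.
Qed.

Lemma deg_sum F v : deg_in ends F v = \sum_(e in F) incident ends v e.
Proof.
rewrite /deg_in -sum1_card [RHS]big_mkcond [LHS]big_mkcond; apply: eq_bigr => e _.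
by rewrite !inE; case: (e \in F); case: incident.
Qed.
End S.

Lemma Gk_2conn k (hk : 2 <= k) : two_connected (@Gk_ends k).
Proof.
have k0 : 0 < k by apply: leq_trans hk.
pose j0 : 'I_k := Ordinal k0.
split.
  move=> x y; apply: (@hub _ _ _ None (inl false)) => //; clear x y => x.
  case: x => [[|]|jb] _.
  - have [h1 _] := @adj_edge _ _ (@Gk_ends k) None _ _ (inl ((j0,false),true)) erefl erefl erefl.
    have [_ h2] := @adj_edge _ _ (@Gk_ends k) None _ _ (inl ((j0,false),false)) erefl erefl erefl.
    exact: connect_trans h1 h2.
  - exact: connect0.
  by have [_ h] := @adj_edge _ _ (@Gk_ends k) None _ _ (inl (jb,false)) erefl erefl erefl.
move=> w [x [y [hx [hy]]]]; apply/negP/negPn.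
case: w hx hy => [c|[j b]] hx hy.
  apply: (@hub _ _ _ (Some (inl c)) (inl (~~ c))) => //; clear hx hy.
  case=> [c'|jb] hc.
  - by move: hc; case: c; case: c' => //= _; apply: connect0.
  apply: (proj2 (@adj_edge _ _ (@Gk_ends k) (Some (inl c)) _ _ (inl (jb,~~ c)) erefl _ _)) => //; by clear hc; case: c.
apply: (@hub _ _ _ (Some (inr (j,b))) (inl false)) => //; clear hx hy.
case=> [c|jb] hc.
  case: c {hc}; last exact: connect0.
  have nb : Some (inr (j,~~b)) != Some (inr (j,b)) :> option (Gk_V k).
    by apply/negP=> /eqP [] /eqP; case: b.
  have h1 := fun H => proj1 (@adj_edge _ _ (@Gk_ends k) (Some (inr (j,b))) _ _ (inl ((j,~~b),true)) erefl erefl H).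
  have h2 := fun H => proj2 (@adj_edge _ _ (@Gk_ends k) (Some (inr (j,b))) _ _ (inl ((j,~~b),false)) erefl erefl H).
  apply: connect_trans (h1 nb) (h2 nb).
by have [_ h] := @adj_edge _ _ (@Gk_ends k) (Some (inr (j,b))) _ _ (inl (jb,false)) erefl erefl hc.
Qed.

Lemma inc_u k (c : bool) (e : Gk_E k) : incident (@Gk_ends k) (inl c) e =
  if e is inl (_, c') then c == c' else false.
Proof. by case: e => [[jb c']|[j m]]; rewrite /incident /=; case: c => //; case: c'. Qed.

Lemma inc_v k (j : 'I_k) (b : bool) (e : Gk_E k) : incident (@Gk_ends k) (inr (j,b)) e =
  match e with inl (jb, _) => jb == (j,b) | inr (j', _) => j == j' end.
Proof.
case: e => [[jb c']|[j' m]]; rewrite /incident /=.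
  exact: eq_sym.
case: (eqVneq j j') => [->|ne].
  by case: b; rewrite eqxx ?orbT.
by apply/negP => /orP [] /eqP [] /eqP; rewrite (negbTE ne).
Qed.

Lemma sum_pair (I J : finType) (f : I * J -> nat) : \sum_p f p = \sum_i \sum_j f (i,j).
Proof. by rewrite pair_bigA; apply: eq_bigr; case. Qed.

Lemma Gk_reg k (hk : 2 <= k) : regular (@Gk_ends k) (2 * k).
Proof.
move=> v; rewrite deg_sum (eq_bigl predT) => [|e]; last by rewrite inE.
rewrite big_sumType /=.
case: v => [c|[j b]].
  rewrite [X in _ + X]big1 => [|[j m] _]; last by rewrite inc_u.
  rewrite addn0 sum_pair.
  under eq_bigr => jb _ do rewrite big_bool /= !inc_u.
  under eq_bigr => jb _ do have -> : (c == true) + (c == false) = 1 by case: c.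
  by rewrite sum_nat_const card_prod card_ord card_bool muln1 mulnC.
rewrite sum_pair [X in _ + X]sum_pair.
under eq_bigr => jb _ do rewrite big_bool /= !inc_v.
under [X in _ + X]eq_bigr => j' _ do under eq_bigr => m _ do rewrite inc_v.
rewrite (bigD1 (j,b)) //= eqxx big1 => [|jb /negbTE ->] //.
rewrite (bigD1 j) //= [X in _ + (_ + X)]big1 => [|j' ne]; last first.
  by rewrite big1 // => m _; rewrite eq_sym (negbTE ne).
rewrite eqxx sum_nat_const card_ord; lia.
Qed.

Definition gj k (j : 'I_k) (e : Gk_E k) : nat := if e is inr (j', _) then j == j' else false.

Lemma peq k (j j' : 'I_k) (b b' : bool) : ((j',b') == (j,b)) = (j' == j) && (b' == b).
Proof. by []. Qed.

Lemma aux k (j j' : 'I_k) (b' : bool) :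
  ((j',b') == (j,false)) + ((j',b') == (j,true)) = (j' == j) + 2 * 0.
Proof. by rewrite !peq; case: (j' == j); case: b'. Qed.

Lemma pt_v k (j : 'I_k) (e : Gk_E k) :
  incident (@Gk_ends k) (inr (j,false)) e + incident (@Gk_ends k) (inr (j,true)) e
  = (e \in Gk_cycle j) + 2 * gj j e.
Proof.
rewrite !inc_v inE; case: e => [[[j' b'] c]|[j' m]] /=.
  exact: aux.
by case: (j == j').
Qed.

Lemma pt_u k (e : Gk_E k) :
  incident (@Gk_ends k) (inl false) e + incident (@Gk_ends k) (inl true) e
  = \sum_(j < k) (e \in Gk_cycle j).
Proof.
rewrite !inc_u; case: e => [[[j' b'] c]|[j' m]] /=.
  rewrite (bigD1 j') //= inE eqxx big1 => [|j ne]; last by rewrite inE eq_sym (negbTE ne).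
  by case: c.
by rewrite big1 // => j _; rewrite inE.
Qed.

Lemma Gk_factor k (t : nat) (F : {set Gk_E k}) :
     factor (@Gk_ends k) t F ->
     (forall j : 'I_k, F :&: Gk_cycle j != set0) -> k <= t.
Proof.
move=> hF hC.
have h2 : forall j : 'I_k, 2 <= \sum_(e in F) (e \in Gk_cycle j).
  move=> j.
  have e1 : t + t = \sum_(e in F) (e \in Gk_cycle j) + 2 * \sum_(e in F) gj j e.
    rewrite -{1}(hF (inr (j,false))) -(hF (inr (j,true))) !deg_sum -big_split /=.
    rewrite big_distrr -big_split /=; apply: eq_bigr => e _; exact: pt_v.
  have e2 : 1 <= \sum_(e in F) (e \in Gk_cycle j).
    case/set0Pn: (hC j) => e; rewrite inE => /andP [eF eC].
    by rewrite (bigD1 e) //= eC.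
  lia.
have e3 : t + t = \sum_(j < k) \sum_(e in F) (e \in Gk_cycle j).
  rewrite -{1}(hF (inl false)) -(hF (inl true)) !deg_sum -big_split /= exchange_big /=.
  apply: eq_bigr => e _; exact: pt_u.
have : \sum_(j < k) 2 <= t + t by rewrite e3; apply: leq_sum => j _; exact: h2.
rewrite sum_nat_const card_ord; lia.
Qed.

Theorem mainTheorem15 (k : nat) (hk : 2 <= k) :
  loopless (@Gk_ends k) /\
  two_connected (@Gk_ends k) /\
  regular (@Gk_ends k) (2 * k) /\
  (forall (t : nat) (F : {set Gk_E k}), 0 < t ->
     factor (@Gk_ends k) t F ->
     (forall j : 'I_k, F :&: Gk_cycle j != set0) ->
     k <= t).
Proof.
split; first by case=> [[jb c]|[j m]] //=; apply/negP => /eqP [].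
split; first exact: Gk_2conn.
split; first exact: Gk_reg.
move=> t F _; exact: Gk_factor.
Qed.
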